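(* Let $n\ge 1$, let $e,f$ be scalars, and let $A,B,C,D,M$ be $n\times n$ matrices. Then $d_{C,D}(M)-d_{A,B}(M)\le 1$ in each of the following cases: (1) $A=C$, $B=Z_e$, $D=Z_f$; (2) $A=C$, $B=Z_e^T$, $D=Z_f^T$; (3) $B=D$, $A=Z_e$, $C=Z_f$; (4) $B=D$, $A=Z_e^T$, $C=Z_f^T$.
   Context: For a scalar $f$, $Z_f$ denotes the $n\times n$ matrix of $f$-circular shift: $Z_f=\begin{pmatrix}\mathbf 0^T & f\\ I_{n-1} & \mathbf 0\end{pmatrix}$ (ones on the first subdiagonal, $f$ in the upper right corner, zeros elsewhere). For matrices $A,B,M$ of compatible sizes, the (Sylvester) displacement rank of $M$ with respect to the operator pair $(A,B)$ is $d_{A,B}(M)=\operatorname{rank}(AM-MB)$. *)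

(* Defs.v *)
From mathcomp Require Import all_boot all_order all_algebra.
Set Implicit Arguments. Unset Strict Implicit. Unset Printing Implicit Defensive.
Import GRing.Theory.
Local Open Scope ring_scope.

Definition Zshift (F : fieldType) (n : nat) (f : F) : 'M[F]_n :=
  \matrix_(i < n, j < n)
    ((if i == j.+1 :> nat then 1 else 0) +
     (if (i == 0%N :> nat) && (j == n.-1 :> nat) then f else 0)).

Definition disp_rank (F : fieldType) (n : nat) (A B M : 'M[F]_n) : nat :=
  \rank (A *m M - M *m B).

(* Main.v *)
Require Import Defs.
From mathcomp Require Import all_boot all_order all_algebra.
Local Open Scope ring_scope.
Import GRing.Theory.

Lemma Zdiff (F : fieldType) (n : nat) (e f : F) :
  Zshift n.+1 e - Zshift n.+1 f = (e - f) *: delta_mx 0 ord_max.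
Proof.
apply/matrixP => i j; rewrite !mxE.
have -> : ((i == 0 :> 'I_n.+1) && (j == ord_max)) = ((i == 0%N :> nat) && (j == n.+1.-1 :> nat)) by [].
case: ((i == 0%N :> nat) && (j == n.+1.-1 :> nat)) => /=.
  by rewrite mulr1 opprD addrACA subrr add0r.
by rewrite mulr0 !addr0 subrr.
Qed.

Lemma rankZdiff (F : fieldType) (n : nat) (e f : F) :
  (\rank (Zshift n.+1 e - Zshift n.+1 f)%R <= 1)%N.
Proof.
rewrite Zdiff -mul_scalar_mx.
apply: leq_trans (mxrankM_maxr _ _) _.
by rewrite mxrank_delta.
Qed.

Lemma rankZdiffT (F : fieldType) (n : nat) (e f : F) :
  (\rank ((Zshift n.+1 e)^T - (Zshift n.+1 f)^T)%R <= 1)%N.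
Proof. by rewrite -linearB /= mxrank_tr rankZdiff. Qed.

Theorem theorem3p2 (F : fieldType) (n : nat) (e f : F)
    (A B C D M : 'M[F]_n.+1) :
  ((A = C /\ B = Zshift n.+1 e /\ D = Zshift n.+1 f) \/
   (A = C /\ B = (Zshift n.+1 e)^T /\ D = (Zshift n.+1 f)^T) \/
   (B = D /\ A = Zshift n.+1 e /\ C = Zshift n.+1 f) \/
   (B = D /\ A = (Zshift n.+1 e)^T /\ C = (Zshift n.+1 f)^T)) ->
  (disp_rank C D M <= disp_rank A B M + 1)%N.
Proof.
rewrite /disp_rank.
have H1 : forall X Y : 'M[F]_n.+1, (\rank (X - Y)%R <= 1)%N -> A = C -> B = X -> D = Y ->
   (\rank (C *m M - M *m D)%R <= \rank (A *m M - M *m B)%R + 1)%N.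
  move=> X Y hr -> -> ->.
  have -> : C *m M - M *m Y = (C *m M - M *m X) + M *m (X - Y).
    by rewrite mulmxBr addrA subrK.
  apply: leq_trans (mxrank_add _ _) _; rewrite leq_add2l.
  exact: leq_trans (mxrankM_maxr _ _) hr.
have H2 : forall X Y : 'M[F]_n.+1, (\rank (X - Y)%R <= 1)%N -> B = D -> A = X -> C = Y ->
   (\rank (C *m M - M *m D)%R <= \rank (A *m M - M *m B)%R + 1)%N.
  move=> X Y hr -> -> ->.
  have -> : Y *m M - M *m D = (X *m M - M *m D) + (- (X - Y)) *m M.
    by rewrite mulNmx mulmxBl opprB [RHS]addrC [RHS]addrA subrK.
  apply: leq_trans (mxrank_add _ _) _; rewrite leq_add2l.
  by apply: leq_trans (mxrankM_maxl _ _) _; rewrite mxrank_opp.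
case=> [[h1 [h2 h3]]|[[h1 [h2 h3]]|[[h1 [h2 h3]]|[h1 [h2 h3]]]]].
- exact: H1 (rankZdiff _ _ e f) h1 h2 h3.
- exact: H1 (rankZdiffT _ _ e f) h1 h2 h3.
- exact: H2 (rankZdiff _ _ e f) h1 h2 h3.
- exact: H2 (rankZdiffT _ _ e f) h1 h2 h3.
Qed.
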